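(* Let $h$ be the $11$-uniform morphism on $\{0,1,2,3\}$ given by $h(0)=01312021310$, $h(1)=12023132021$, $h(2)=23130203132$, $h(3)=30201310203$. Every factor of the infinite fixed point $h^\omega(0)$ that is a $\tfrac32$-power (i.e., of length $p$ with period $q$ where $p/q=3/2$) has length $a\cdot 11^i$ for some $a\in\{3,6,9,12\}$ and integer $i\ge0$.
   Context: A word $x=x[1..n]$ has period $q$ if $x[i]=x[i+q]$ for $1\le i\le n-q$. For integers $p>q\ge1$, $x$ is a $(p/q)$-power if it has length $p$ and period $q$. *)

(* Defs.v *)
From mathcomp Require Import all_boot.
Set Implicit Arguments. Unset Strict Implicit. Unset Printing Implicit Defensive.

Definition h (a : nat) : seq nat :=
  match a with
  | 0 => [:: 0; 1; 3; 1; 2; 0; 2; 1; 3; 1; 0]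
  | 1 => [:: 1; 2; 0; 2; 3; 1; 3; 2; 0; 2; 1]
  | 2 => [:: 2; 3; 1; 3; 0; 2; 0; 3; 1; 3; 2]
  | _ => [:: 3; 0; 2; 0; 1; 3; 1; 0; 2; 0; 3]
  end.

Definition hseq (w : seq nat) : seq nat := flatten (map h w).

Definition hiter (k : nat) : seq nat := iter k hseq [:: 0].

(* The infinite fixed point h^omega(0), as a function nat -> letter:
   its n-th letter (0-indexed) is the n-th letter of h^(n+1)(0), which has
   length 11^(n+1) > n; h^k(0) is a prefix of h^(k+1)(0) since h(0) starts with 0. *)
Definition hfix (n : nat) : nat := nth 0 (hiter n.+1) n.

Definition factor (i p : nat) : seq nat := [seq hfix (i + j) | j <- iota 0 p].

Definition has_period (x : seq nat) (q : nat) : Prop :=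
  forall j, j + q < size x -> nth 0 x j = nth 0 x (j + q).

Definition is_power (x : seq nat) (p q : nat) : Prop :=
  [/\ 1 <= q, q < p, size x = p & has_period x q].

(* Main.v *)
Require Import Defs.
From mathcomp Require Import all_boot.
From mathcomp Require Import zify.

Lemma size_h a : size (h a) = 11.
Proof. by case: a => [|[|[|a]]]. Qed.

Lemma h_lt4 a j : nth 0 (h a) j < 4.
Proof.
case: (ltnP j 11) => Hj; last by rewrite nth_default // size_h.
have Ha : all (fun x => x < 4) (h a) by case: a => [|[|[|a]]].
by apply: (allP Ha); apply: mem_nth; rewrite size_h.
Qed.

Lemma h_head a : nth 0 (h a) 0 = a \/ 3 <= a.
Proof. by case: a => [|[|[|a]]]; auto. Qed.

Lemma size_hseq w : size (hseq w) = 11 * size w.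
Proof.
elim: w => [|x w IH] //=; rewrite /hseq /= size_cat -/(hseq w) IH size_h; lia.
Qed.

Lemma nth_hseq w n j : n < size w -> j < 11 ->
  nth 0 (hseq w) (11 * n + j) = nth 0 (h (nth 0 w n)) j.
Proof.
elim: w n => [|x w IH] n //= Hn Hj.
rewrite /hseq /= nth_cat -/(hseq w) size_h.
case: n Hn => [|n] Hn /=.
  by rewrite muln0 add0n Hj.
have -> : 11 * n.+1 + j < 11 = false by lia.
have -> : 11 * n.+1 + j - 11 = 11 * n + j by lia.
by apply: IH.
Qed.

Lemma nth_hseq' w n : n < 11 * size w ->
  nth 0 (hseq w) n = nth 0 (h (nth 0 w (n %/ 11))) (n %% 11).
Proof.
move=> Hn; rewrite {1}(divn_eq n 11) mulnC; apply: nth_hseq; lia.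
Qed.

Lemma size_hiter k : size (hiter k) = 11 ^ k.
Proof. elim: k => [|k IH] //=; by rewrite size_hseq IH expnS. Qed.

Lemma hiterS k : hiter k.+1 = hseq (hiter k). Proof. by []. Qed.

Lemma hiter_S k n : n < size (hiter k) -> nth 0 (hiter k.+1) n = nth 0 (hiter k) n.
Proof.
elim: k n => [|k IH] n Hn.
  by case: n Hn.
move: Hn; rewrite !size_hiter => Hn.
rewrite hiterS nth_hseq'; last by rewrite size_hiter; lia.
rewrite IH; last by (rewrite size_hiter; rewrite expnS in Hn; lia).
by rewrite hiterS nth_hseq' // size_hiter -expnS.
Qed.

Lemma hiter_mono k d n : n < size (hiter k) -> nth 0 (hiter (k + d)) n = nth 0 (hiter k) n.
Proof.
move=> Hn; elim: d => [|d IH]; first by rewrite addn0.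
rewrite addnS hiter_S // size_hiter.
rewrite size_hiter in Hn; apply: (leq_trans Hn); apply: leq_pexp2l => //; lia.
Qed.

Lemma lt_pow n : n < 11 ^ n.+1.
Proof. apply: (leq_trans (ltn_expl n (isT : 1 < 11))); apply: leq_pexp2l => //. Qed.

Lemma hfixE k n : n < 11 ^ k -> hfix n = nth 0 (hiter k) n.
Proof.
move=> Hk; rewrite /hfix.
have H1 : n < 11 ^ n.+1 by apply: lt_pow.
rewrite -(hiter_mono n.+1 k); last by rewrite size_hiter.
rewrite -[RHS](hiter_mono k n.+1); last by rewrite size_hiter.
by rewrite addnC.
Qed.

Lemma hfix_11 n j : j < 11 -> hfix (11 * n + j) = nth 0 (h (hfix n)) j.
Proof.
move=> Hj.
have H1 : n < 11 ^ n.+1 by apply: lt_pow.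
rewrite (hfixE n.+2); last by rewrite expnS; lia.
by rewrite hiterS nth_hseq ?size_hiter // -(hfixE H1).
Qed.

Lemma hfix_lt4 n : hfix n < 4.
Proof.
case: n => [|n] //.
rewrite (divn_eq n.+1 11) mulnC hfix_11 ?ltn_mod //; exact: h_lt4.
Qed.

Lemma hfix_11_0 n : hfix (11 * n) = hfix n.
Proof.
have := hfix_11 n 0 isT; rewrite addn0 => ->.
case: (h_head (hfix n)) => // H.
have := hfix_lt4 n; case: (hfix n) H => [|[|[|[|x]]]] //.
Qed.

Definition G a w := nth 0 (h (nth 0 (h a) (w %/ 11))) (w %% 11).
Definition F a b w := if w < 121 then G a w else G b (w - 121).

Lemma hfix_G u w : w < 121 -> hfix (121 * u + w) = G (hfix u) w.
Proof.
move=> Hw; rewrite /G.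
have -> : 121 * u + w = 11 * (11 * u + w %/ 11) + w %% 11.
  rewrite {1}(divn_eq w 11); lia.
rewrite hfix_11 ?ltn_mod // hfix_11 //; lia.
Qed.

Lemma hfix_F u w : w < 242 -> hfix (121 * u + w) = F (hfix u) (hfix u.+1) w.
Proof.
move=> Hw; rewrite /F; case: ifP => H; first by rewrite hfix_G.
have -> : 121 * u + w = 121 * u.+1 + (w - 121) by lia.
rewrite hfix_G //; lia.
Qed.

Definition check1 := all (fun r => all (fun a => all (fun b => all (fun c =>
  has (fun j => nth 0 (h a) j != (if j + r < 11 then nth 0 (h b) (j + r)
                                   else nth 0 (h c) (j + r - 11))) (iota 0 11))
  (iota 0 4)) (iota 0 4)) (iota 0 4)) (iota 1 10).

Lemma check1_ok : check1 = true. Proof. by vm_compute. Qed.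

Definition check2 := all (fun v => all (fun a => all (fun b => all (fun m =>
  (m %% 11 != 0) ==> has (fun t => F a b (v + t) != F a b (v + t + 2 * m)) (iota 0 m))
  (iota 5 16)) (iota 0 4)) (iota 0 4)) (iota 0 121).

Lemma check2_ok : check2 = true. Proof. by vm_compute. Qed.

Lemma in4 n : hfix n \in iota 0 4.
Proof. by rewrite mem_iota hfix_lt4. Qed.

Lemma core m : forall i, 0 < m ->
  (forall t, t < m -> hfix (i + t) = hfix (i + t + 2 * m)) ->
  exists a k, a \in [:: 3; 6; 9; 12] /\ 3 * m = a * 11 ^ k.
Proof.
elim/ltn_ind: m => m IH i Hm0 Hper.
case: (leqP m 4) => Hm4.
  exists (3 * m), 0; split; last by rewrite expn0 muln1.
  by case: m Hm0 Hm4 {IH Hper} => [|[|[|[|[|]]]]].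
case: (boolP (11 %| m)) => Hdiv.
  set m' := m %/ 11.
  have Hm : m = 11 * m' by rewrite /m'; lia.
  have Hm'0 : 0 < m' by lia.
  have Hper' : forall t, t < m' -> hfix ((i + 10) %/ 11 + t) = hfix ((i + 10) %/ 11 + t + 2 * m').
    move=> t Ht.
    have := Hper (11 * ((i + 10) %/ 11 + t) - i) _.
    have -> : i + (11 * ((i + 10) %/ 11 + t) - i) = 11 * ((i + 10) %/ 11 + t) by lia.
    have -> : 11 * ((i + 10) %/ 11 + t) + 2 * m =
              11 * ((i + 10) %/ 11 + t + 2 * m') by lia.
    rewrite !hfix_11_0; apply; lia.
  have [a [k [Ha Hk]]] := IH m' ltac:(lia) ((i + 10) %/ 11) Hm'0 Hper'.
  exists a, k.+1; split => //; rewrite expnS; lia.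
exfalso.
case: (leqP 21 m) => Hm21.
  set m0 := (i + 10) %/ 11.
  set q' := (2 * m) %/ 11.
  set r := (2 * m) %% 11.
  have Hr : 1 <= r <= 10 by rewrite /r; lia.
  have Hr' : r \in iota 1 10 by rewrite mem_iota; lia.
  have := allP check1_ok r Hr'.
  move=> /allP /(_ _ (in4 m0)) /allP /(_ _ (in4 (m0 + q'))) /allP.
  move=> /(_ _ (in4 (m0 + q').+1)) /hasP [j].
  rewrite mem_iota => /andP [_ Hj].
  have Ht : 11 * m0 + j - i < m by rewrite /m0; lia.
  have E := Hper _ Ht.
  have E1 : i + (11 * m0 + j - i) = 11 * m0 + j by rewrite /m0; lia.
  rewrite E1 hfix_11 // in E.
  case: ifP => Hjr.
    have E2 : 11 * m0 + j + 2 * m = 11 * (m0 + q') + (j + r) by lia.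
    by rewrite E2 hfix_11 // in E; rewrite E eqxx.
  have E2 : 11 * m0 + j + 2 * m = 11 * (m0 + q').+1 + (j + r - 11) by lia.
  by rewrite E2 hfix_11 in E; [rewrite E eqxx | lia].
set u := i %/ 121.
set v := i %% 121.
have Hi : i = 121 * u + v by rewrite /u /v; lia.
have Hv' : v \in iota 0 121 by rewrite mem_iota /v; lia.
have Hm' : m \in iota 5 16 by rewrite mem_iota; lia.
have := allP check2_ok v Hv'.
move=> /allP /(_ _ (in4 u)) /allP /(_ _ (in4 u.+1)) /allP /(_ m Hm').
move=> /implyP /(_ ltac:(lia)) /hasP [t].
rewrite mem_iota => /andP [_ Ht].
have := Hper t Ht.
have Hv : v < 121 by rewrite /v; lia.
rewrite Hi -addnA hfix_F; last lia.
rewrite -addnA -addnA hfix_F; last lia.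
by rewrite addnA => ->; rewrite eqxx.
Qed.

Theorem mainTheorem9 :
  forall (i p q : nat),
    2 * p = 3 * q ->
    is_power (factor i p) p q ->
    exists (a k : nat), a \in [:: 3; 6; 9; 12] /\ p = a * 11 ^ k.
Proof.
move=> i p q Hpq [Hq1 Hqp Hsz Hper].
set m := p - q.
have Hq : q = 2 * m by rewrite /m; lia.
have Hp : p = 3 * m by rewrite /m; lia.
rewrite Hp; apply: (core m i); first lia.
move=> t Ht.
have Ht' : t + q < size (factor i p) by rewrite Hsz; lia.
have := Hper t Ht'.
rewrite /factor !(nth_map 0) ?size_iota ?nth_iota; try lia.
by rewrite Hq !add0n addnA.
Qed.
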